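(* Let $\mathbb{F}$ be a field of characteristic zero, $d\ge 2$, $n=2d-2$, $P_n=\mathbb{F}[x_1,\dots,x_n]$ and $I_n=\big(x_1^2,\dots,x_n^2,(x_1+\cdots+x_n)^2\big)$; let $\mathrm{in}(I_n)$ be its initial ideal with respect to the reverse lexicographic order. If $\mu\in P_n$ is a monomial with $\deg(\mu)\le d-2$ and $\mu\notin\mathrm{in}(I_n)$, then there exists a monomial $\widetilde{\mu}\in P_n$ which is a multiple of $\mu$, with $\deg(\widetilde\mu)=\deg(\mu)+1$ and $\widetilde\mu\notin\mathrm{in}(I_n)$.
   Context: The reverse lexicographic order is taken with $x_1>x_2>\cdots>x_n$. *)

(* Defs.v *)
From HB Require Import structures.
From mathcomp Require Import all_boot all_order all_algebra.
From mathcomp Require Import mpoly.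
Set Implicit Arguments. Unset Strict Implicit. Unset Printing Implicit Defensive.
Import GRing.Theory.
Local Open Scope ring_scope.

(* Variables x_1,...,x_n are 'X_0,...,'X_(n-1); the order is x_1 > ... > x_n. *)

Definition revlex_lt (n : nat) (m1 m2 : 'X_{1..n}) : bool :=
  (mdeg m1 < mdeg m2)%N ||
  ((mdeg m1 == mdeg m2) &&
   [exists i : 'I_n, (m2 i < m1 i)%N &&
      [forall j : 'I_n, (i < j)%N ==> (m1 j == m2 j)]]).

Definition is_lead_mono (F : fieldType) (n : nat) (p : {mpoly F[n]})
  (m : 'X_{1..n}) : Prop :=
  m \in msupp p /\ forall m', m' \in msupp p -> m' != m -> revlex_lt m' m.

Definition in_ideal (F : fieldType) (n : nat) (S : {mpoly F[n]} -> Prop)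
  (p : {mpoly F[n]}) : Prop :=
  exists (k : nat) (c g : 'I_k -> {mpoly F[n]}),
    (forall i, S (g i)) /\ p = \sum_(i < k) c i * g i.

Definition In_gens (F : fieldType) (n : nat) (q : {mpoly F[n]}) : Prop :=
  (exists i : 'I_n, q = 'X_i ^+ 2) \/ q = (\sum_(i < n) 'X_i) ^+ 2.

Definition In_ideal (F : fieldType) (n : nat) : {mpoly F[n]} -> Prop :=
  in_ideal (@In_gens F n).

Definition initial_ideal (F : fieldType) (n : nat) (I : {mpoly F[n]} -> Prop)
  : {mpoly F[n]} -> Prop :=
  in_ideal (fun q => exists (f : {mpoly F[n]}) (m : 'X_{1..n}),
                       I f /\ f != 0 /\ is_lead_mono f m /\ q = 'X_[m]).

(* Main.v *)
Require Import Defs.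
From HB Require Import structures.
From mathcomp Require Import all_boot all_order all_algebra.
From mathcomp Require Import mpoly.
From mathcomp Require Import zify.
Import GRing.Theory.
Local Open Scope ring_scope.
Set Implicit Arguments. Unset Strict Implicit. Unset Printing Implicit Defensive.
From mathcomp Require Import ring.

Section Ideal.
Variables (F : fieldType) (n : nat).
Implicit Types (S : {mpoly F[n]} -> Prop) (p q : {mpoly F[n]}).

Lemma in_ideal0 S : in_ideal S 0.
Proof. exists 0%N, (fun _ => 0), (fun _ => 0); split; [by case | by rewrite big_ord0]. Qed.

Lemma in_idealD S p q : in_ideal S p -> in_ideal S q -> in_ideal S (p + q).
Proof.
move=> [k1 [c1 [g1 [H1 ->]]]] [k2 [c2 [g2 [H2 ->]]]].
exists (k1 + k2)%N.
exists (fun i => match split i with inl a => c1 a | inr b => c2 b end).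
exists (fun i => match split i with inl a => g1 a | inr b => g2 b end).
split.
  by move=> i; case: (split i).
rewrite big_split_ord /=; congr (_ + _); apply: eq_bigr => i _.
  by rewrite (unsplitK (inl _ i)).
by rewrite (unsplitK (inr _ i)).
Qed.

Lemma in_idealMl S c p : in_ideal S p -> in_ideal S (c * p).
Proof.
move=> [k [c1 [g1 [H1 ->]]]]; exists k, (fun i => c * c1 i), g1; split => //.
by rewrite mulr_sumr; apply: eq_bigr => i _; rewrite mulrA.
Qed.

Lemma in_ideal_gen S g : S g -> in_ideal S g.
Proof.
move=> Hg; exists 1%N, (fun _ => 1), (fun _ => g); split => //.
by rewrite big_ord1 mul1r.
Qed.

Lemma in_idealN S p : in_ideal S p -> in_ideal S (- p).
Proof. by move=> H; rewrite -mulN1r; apply: in_idealMl. Qed.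

Lemma in_idealB S p q : in_ideal S p -> in_ideal S q -> in_ideal S (p - q).
Proof. by move=> Hp Hq; apply: in_idealD => //; apply: in_idealN. Qed.

Lemma in_idealZ S c p : in_ideal S p -> in_ideal S (c *: p).
Proof. by move=> H; rewrite -mul_mpolyC; apply: in_idealMl. Qed.

Lemma in_ideal_sum S (I : Type) (r : seq I) (P : pred I) (G : I -> {mpoly F[n]}) :
  (forall i, P i -> in_ideal S (G i)) -> in_ideal S (\sum_(i <- r | P i) G i).
Proof.
move=> H; elim/big_rec: _ => [|i x Pi Hx]; first exact: in_ideal0.
by apply: in_idealD => //; apply: H.
Qed.

Lemma in_idealMr S c p : in_ideal S p -> in_ideal S (p * c).
Proof. by rewrite mulrC; apply: in_idealMl. Qed.

End Ideal.

Definition sqf n (m : 'X_{1..n}) : bool := [forall i, m i <= 1]%N.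

Section Lead.
Variables (F : fieldType) (n : nat).
Implicit Types (p q f : {mpoly F[n]}) (m r : 'X_{1..n}).

Lemma mcoeffMXU q (i : 'I_n) m :
  (q * 'X_i)@_m = if (0 < m i)%N then q@_(m - U_(i))%MM else 0.
Proof.
case: ifP => Hm.
  have E : (m - U_(i) + U_(i))%MM = m by rewrite submK // lep1mP -lt0n.
  by rewrite -{1}E addmC mcoeffMX.
apply: memN_msupp_eq0; apply/negP => Hin.
move: Hin; rewrite (perm_mem (msuppMX _ _)) => /mapP [m' _ Em].
by move: Hm; rewrite Em mnmDE mnm1E eqxx.
Qed.

Lemma NS_in q : (forall m, q@_m != 0 -> ~~ sqf m) -> In_ideal q.
Proof.
move=> H; rewrite (mpolyE q) big_seq; apply: in_ideal_sum => m Hm.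
have /H : q@_m != 0 by rewrite -mcoeff_msupp.
rewrite /sqf negb_forall => /existsP [i]; rewrite -ltnNge => Hi.
have E : m = (m - U_(i) *+ 2 + U_(i) *+ 2)%MM.
  rewrite submK //; apply/mnm_lepP => j; rewrite mulmnE mnm1E.
  by case: eqP => [<-|]; rewrite ?mul1n ?mul0n.
rewrite E mpolyXD -mpolyXn scalerAl; apply: in_idealMl.
by apply: in_ideal_gen; left; exists i.
Qed.

Lemma revlex_ltD r m' m : revlex_lt m' m -> revlex_lt (r + m') (r + m).
Proof.
rewrite /revlex_lt !mdegD ltn_add2l eqn_add2l.
case/orP => [->//|/andP [-> /existsP [i /andP [h1 /forallP h2]]]].
apply/orP; right; apply/existsP; exists i; rewrite !mnmDE ltn_add2l h1 /=.
by apply/forallP => j; rewrite !mnmDE eqn_add2l; apply: h2.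
Qed.

Lemma lead_shift f m r : is_lead_mono f m -> is_lead_mono (f * 'X_[r]) (r + m).
Proof.
move=> [Hm Hlt]; split.
  by rewrite (perm_mem (msuppMX _ _)); apply: map_f.
move=> m''; rewrite (perm_mem (msuppMX _ _)) => /mapP [m' Hm' ->] Hne.
apply: revlex_ltD; apply: Hlt => //; apply: contraNneq Hne => ->; done.
Qed.

Lemma notin_init K (h : 'I_n -> {mpoly F[K]}) (o : 'X_{1..K}) (T : 'X_{1..n}) :
  (forall (q : {mpoly F[K]}) i, (q * h i ^+ 2)@_o = 0) ->
  (forall (q : {mpoly F[K]}), (q * (\sum_i h i) ^+ 2)@_o = 0) ->
  ('X_[T] \mPo [tuple h i | i < n])@_o != 0 ->
  (forall m, revlex_lt m T -> ('X_[m] \mPo [tuple h i | i < n])@_o = 0) ->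
  ~ initial_ideal (@In_ideal F n) 'X_[T].
Proof.
set lq := [tuple h i | i < n].
move=> H1 H2 HT Hlt [k [c [g [Hg E]]]].
have Hx : forall j, 'X_j \mPo lq = h j.
  by move=> j; rewrite comp_mpolyXU -tnth_nth tnth_mktuple.
have Hphi : forall q f, In_ideal f -> ((q * f) \mPo lq)@_o = 0.
  move=> q f [k' [c' [g' [Hg' ->]]]].
  rewrite mulr_sumr rmorph_sum raddf_sum /=; apply: big1 => i _.
  rewrite mulrA rmorphM /=; case: (Hg' i) => [[j ->]|->].
    by rewrite rmorphXn /= Hx; apply: H1.
  rewrite rmorphXn rmorph_sum /=.
  under eq_bigr do rewrite Hx.
  exact: H2.
have [j Hj] : exists j, (c j * g j)@_T != 0.
  apply/existsP; apply: contraT; rewrite negb_exists => /forallP Hall.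
  have := congr1 (mcoeff T) E.
  rewrite mcoeffX eqxx raddf_sum big1 => [|j _]; last by apply/eqP; exact: negbNE (Hall j).
  by move/eqP; rewrite oner_eq0.
case: (Hg j) => f [m [If [fnz [Hlead Eg]]]]; rewrite Eg in Hj.
have : T \in msupp (c j * 'X_[m]) by rewrite mcoeff_msupp.
rewrite (perm_mem (msuppMX _ _)) => /mapP [r _ ET].
have Hl : is_lead_mono (f * 'X_[r]) T by rewrite ET addmC; apply: lead_shift.
have := Hphi 'X_[r] f If; rewrite mulrC.
case: Hl => HTs Hl.
rewrite comp_mpolyEX raddf_sum (bigD1_seq T) ?msupp_uniq //= big1_seq => [|m' /andP [Hne Hm']].
  rewrite addr0 mcoeffZ => /eqP; apply/negP; rewrite mulf_neq0 //.
  by rewrite -mcoeff_msupp.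
by rewrite mcoeffZ Hlt ?mulr0 //; apply: Hl.
Qed.

End Lead.

Section Pre.
Variable n : nat.
Implicit Types (b : 'I_n -> nat).

Definition pre b (x : nat) : nat := (\sum_(j < n | (j < x)%N) b j)%N.

Lemma pre0 b : pre b 0 = 0%N.
Proof. by rewrite /pre big1 // => j; rewrite ltn0. Qed.

Lemma preS b x (hx : (x < n)%N) : pre b x.+1 = (pre b x + b (Ordinal hx))%N.
Proof.
rewrite /pre (bigD1 (Ordinal hx)) //= addnC; congr (_ + _)%N; apply: eq_bigl => j.
rewrite ltnS leq_eqVlt -val_eqE /=.
by case: (ltngtP j x).
Qed.

Lemma pre_full b x : (n <= x)%N -> pre b x = (\sum_i b i)%N.
Proof. by move=> h; apply: eq_bigl => j; rewrite (leq_trans (ltn_ord j) h). Qed.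

Lemma pre_mono b x y : (x <= y)%N -> (pre b x <= pre b y)%N.
Proof.
move=> h; rewrite /pre [X in (_ <= X)%N](bigID (fun j : 'I_n => (j < x)%N)) /=.
have -> : (\sum_(j < n | (j < y)%N && (j < x)%N) b j)%N = pre b x.
  by apply: eq_bigl => j; case: ltnP => //= hj; rewrite ltnNge (leq_trans h hj).
exact: leq_addr.
Qed.

Lemma pre_add b1 b2 x : pre (fun i => b1 i + b2 i)%N x = (pre b1 x + pre b2 x)%N.
Proof. exact: big_split. Qed.

Lemma pre_one x : (x <= n)%N -> pre (fun _ => 1%N) x = x.
Proof.
elim: x => [|x IH] h; first exact: pre0.
by rewrite (preS _ h) IH ?addn1 // ltnW.
Qed.

Lemma pre_count b t : (forall i, b i <= 1)%N ->
  (\sum_i ((b i == 1%N) && (pre b i == t) : nat))%N = (t < \sum_i b i)%N.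
Proof.
move=> Hb.
suff H : forall x, (x <= n)%N ->
   pre (fun i => ((b i == 1%N) && (pre b i == t) : nat)) x = (t < pre b x)%N.
  by rewrite -(pre_full _ (leqnn n)) H // pre_full.
elim=> [|x IH] h; first by rewrite !pre0.
rewrite !(preS _ h) (IH (ltnW h)).
have : (b (Ordinal h) <= 1)%N := Hb (Ordinal h).
move: (pre b x) => p.
case: (b (Ordinal h)) => [|[|//]] _.
  by rewrite addn0 andFb addn0.
rewrite eqxx andTb addn1 ltnS.
by case: (ltngtP t p).
Qed.

Lemma pre_lt_sum b (i : 'I_n) : (pre b i + b i <= \sum_j b j)%N.
Proof.
rewrite -(pre_full b (leqnn n)).
have -> : (pre b i + b i = pre b i.+1)%N.
  by rewrite (preS _ (ltn_ord i)); congr (_ + b _)%N; apply: val_inj.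
exact: pre_mono.
Qed.

End Pre.

Lemma pre_step n (f : 'I_n -> nat) (b : 'I_n) : pre f b.+1 = (pre f b + f b)%N.
Proof. by rewrite (preS _ (ltn_ord b)); congr (_ + f _)%N; apply: val_inj. Qed.

Definition Good n (m : 'X_{1..n}) : bool :=
  sqf m && [forall x : 'I_n.+1, (2 * pre (fun i => m i) x <= x + 1)%N].

Lemma sum1_ord k : (\sum_(i < k) 1 = k)%N.
Proof. by rewrite -(pre_full (fun _ => 1%N) (leqnn k)) pre_one. Qed.

Section Witness.
Variables (F : fieldType) (n K : nat) (T : 'X_{1..n}).
Hypotheses (HG : Good T) (HdT : mdeg T = K.+1) (HnK : (2 * K < n)%N).

Let tb := fun i => T i.
Let cb := fun i => (1 - T i)%N.
Definition rk (i : 'I_n) := pre tb i.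
Definition rk' (i : 'I_n) := pre cb i.
Definition tau i := if T i == 1%N then rk i else (rk' i).+1.
Definition sg i : F := if T i == 1%N then 1 else if ((rk' i).+1 < K.+1)%N then -1 else 0.
Definition hh i : {mpoly F[K.+1]} := sg i *: 'X_(inord (tau i)).
Definition ones : 'X_{1..K.+1} := [multinom 1%N | _ < K.+1].

Lemma T01 i : (T i <= 1)%N.
Proof. by case/andP: HG => /forallP H _; apply: H. Qed.

Lemma T0 i : (T i == 1%N) = false -> T i = 0%N.
Proof. by move=> H; move: (T01 i); rewrite leq_eqVlt H ltnS leqn0 => /eqP. Qed.

Lemma sumT : (\sum_i tb i = K.+1)%N.
Proof. by rewrite -HdT mdegE. Qed.

Lemma sumcb : (\sum_i cb i = n - K.+1)%N.
Proof.
have H : (\sum_i cb i + \sum_i tb i = n)%N.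
  rewrite -big_split /= (eq_bigr (fun _ => 1%N)) ?sum1_ord // => i _.
  by rewrite /cb /tb subnK // T01.
move: H; rewrite sumT; lia.
Qed.

Lemma rk_lt i : T i = 1%N -> (rk i < K.+1)%N.
Proof. by move=> h; have := pre_lt_sum tb i; rewrite sumT /tb h /rk addn1. Qed.

Lemma rk_rk' (i : 'I_n) : (rk i + rk' i = i)%N.
Proof.
rewrite /rk /rk' -pre_add; apply: etrans (pre_one (ltnW (ltn_ord i))).
by apply: eq_bigr => j _; rewrite /tb /cb addnC subnK // T01.
Qed.

Lemma goodT (i : 'I_n) : (2 * rk i <= i + 1)%N.
Proof.
case/andP: HG => _ /forallP /(_ (widen_ord (leqnSn n) i)) /=.
by rewrite /rk.
Qed.

Lemma fiber (t : 'I_K.+1) :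
  \sum_i (if inord (tau i) == t then sg i else 0) = (t == ord0)%:R.
Proof.
have E : forall i, (if inord (tau i) == t then sg i else 0) =
   ((T i == 1%N) && (rk i == t))%:R -
   ((T i != 1%N) && ((rk' i).+1 < K.+1)%N && ((rk' i).+1 == t))%:R.
  move=> i; rewrite /tau /sg; case HT: (T i == 1%N) => /=.
    rewrite -(inj_eq val_inj) /= inordK ?rk_lt //; last exact/eqP.
    by case: (rk i == t); rewrite /= ?subr0 ?mulr1n ?mulr0n.
  case Hlt: ((rk' i).+1 < K.+1)%N => /=.
    rewrite -(inj_eq val_inj) /= inordK //.
    by case: ((rk' i).+1 == t); rewrite /= ?sub0r ?subr0 ?mulr1n ?mulr0n ?oppr0.
  by case: (_ == _); rewrite subr0.
rewrite (eq_bigr _ (fun i _ => E i)) sumrB -!natr_sum; clear E.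
have -> : (\sum_i ((T i == 1%N) && (rk i == t)) = 1)%N.
  by rewrite (pre_count (b := tb)) ?sumT ?ltn_ord // => i; apply: T01.
case: t => [[|t'] Ht] /=.
  rewrite big1 ?subr0 // => i _; by rewrite andbF.
have -> : (\sum_i ((T i != 1%N) && ((rk' i).+1 < K.+1)%N && ((rk' i).+1 == t'.+1)) = 1)%N.
  have -> : (\sum_i ((T i != 1%N) && ((rk' i).+1 < K.+1)%N && ((rk' i).+1 == t'.+1))
     = \sum_i ((cb i == 1%N) && (rk' i == t')))%N.
    apply: eq_bigr => i _; rewrite eqSS /cb.
    have := T01 i; case: (T i) => [|[|]]//= _.
    by case: (rk' i =P t') => [->|_]; rewrite ?eqxx ?andbT ?andbF ?Ht.

  rewrite (pre_count (b := cb)) ?sumcb.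
    by apply/eqP; rewrite eqb1; lia.
  by move=> i; rewrite /cb; lia.
by rewrite subrr.
Qed.


Lemma sq_coef (q : {mpoly F[K.+1]}) (c : F) (t : 'I_K.+1) :
  (q * (c *: 'X_t) ^+ 2)@_ones = 0.
Proof.
rewrite exprZn -scalerAr mcoeffZ mpolyXn; apply/eqP; rewrite mulf_eq0; apply/orP; right.
rewrite mcoeff_eq0 (perm_mem (msuppMX _ _)); apply/mapP => [[m' _ E]].
have := congr1 (fun m : 'X_{1..K.+1} => m t) E; rewrite /ones mnmE mnmDE mulmnE mnm1E eqxx /=.
lia.
Qed.

Lemma hsum : \sum_i hh i = 'X_(ord0).
Proof.
apply/mpolyP => u; rewrite raddf_sum /= mcoeffX.
under eq_bigr do rewrite /hh mcoeffZ mcoeffX.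
case: (boolP (mdeg u == 1%N)) => [/mdeg1P [t /eqP ->]|Hu].
  under eq_bigr do rewrite eq_mnm1.
  rewrite eq_mnm1 eq_sym -(fiber t); apply: eq_bigr => i _.
  by case: (_ == _); rewrite ?mulr1 ?mulr0.
have Hne : forall a : 'I_K.+1, (U_(a)%MM == u) = false.
  by move=> a; apply: contraNF Hu => /eqP <-; rewrite mdeg1.
by rewrite Hne big1 // => i _; rewrite Hne mulr0.
Qed.

Lemma compX m : ('X_[m] \mPo [tuple hh i | i < n])@_ones =
  (\prod_i sg i ^+ m i) * ((\sum_i U_(inord (tau i)) *+ m i)%MM == ones)%:R.
Proof.
rewrite comp_mpolyX (eq_bigr (fun i => (sg i ^+ m i) *: 'X_[U_(inord (tau i)) *+ m i])); last first.
  by move=> i _; rewrite tnth_mktuple /hh exprZn mpolyXn.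
rewrite scaler_prod mcoeffZ; congr (_ * _).
by rewrite -(big_morph (fun m => 'X_[m]) (@mpolyXD _ _) (@mpolyX0 _ _)) mcoeffX.
Qed.

Lemma compT : ('X_[T] \mPo [tuple hh i | i < n])@_ones != 0.
Proof.
rewrite compX big1 => [|i _]; last first.
  rewrite /sg; case HT: (T i == 1%N); first by rewrite expr1n.
  by rewrite (T0 HT) expr0.
rewrite mul1r.
have -> : (\sum_i U_(inord (tau i)) *+ T i)%MM == ones.
  apply/eqP/mnmP => t; rewrite mnm_sumE /ones mnmE.
  under eq_bigr do rewrite mulmnE mnm1E.
  rewrite (eq_bigr (fun i => ((tb i == 1%N) && (rk i == t) : nat))).
    by rewrite (pre_count (b := tb)) ?sumT ?ltn_ord // => j; apply: T01.
  move=> i _; rewrite /tau /tb.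
  case HT: (T i == 1%N) => /=.
    rewrite (eqP HT) muln1 -(inj_eq val_inj) /= inordK //; apply: rk_lt; exact/eqP.
  by rewrite (T0 HT) muln0.
by rewrite oner_neq0.
Qed.

Lemma compLt m : revlex_lt m T -> ('X_[m] \mPo [tuple hh i | i < n])@_ones = 0.
Proof.
move=> Hlt; rewrite compX; apply/eqP; rewrite mulf_eq0; apply/norP => [[Hp Hs]].
have /eqP Hs' : ((\sum_i U_(inord (tau i)) *+ m i)%MM == ones).
  by apply: contraNT Hs => /negbTE ->.
have Hsg : forall i, (0 < m i)%N -> sg i != 0.
  move=> i Hi; apply: contraNneq Hp => Hz; apply/prodf_eq0; exists i => //.
  by rewrite Hz expr0n (gtn_eqF Hi).
have Hfib : forall t : 'I_K.+1, (\sum_i ((inord (tau i) == t) * m i) = 1)%N.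
  move=> t; have := congr1 (fun mm : 'X_{1..K.+1} => mm t) Hs'; rewrite mnm_sumE /ones mnmE.
  by under eq_bigr do rewrite mulmnE mnm1E.
have Hdeg : mdeg m = K.+1.
  have := congr1 mdeg Hs'; rewrite mdeg_sum.
  under eq_bigr do rewrite mdegMn mdeg1 mul1n.
  rewrite -mdegE => ->; rewrite /ones mdegE.
  under eq_bigr do rewrite mnmE.
  exact: sum1_ord.
move: Hlt; rewrite /revlex_lt Hdeg HdT ltnn eqxx /= => /existsP [i /andP [Hi /forallP Hj]].
have Hmi : (0 < m i)%N by apply: leq_ltn_trans Hi.
have Hf := Hfib (inord (tau i)); rewrite (bigD1 i) //= eqxx mul1n in Hf.
case HT: (T i == 1%N).
  by move/eqP: HT => HT; rewrite HT in Hi; move: Hf; lia.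
have Hlt' : ((rk' i).+1 < K.+1)%N.
  by move: (Hsg i Hmi); rewrite /sg HT; case: ifP => // _; rewrite eqxx.
have Hc : (\sum_b ((tb b == 1%N) && (rk b == (rk' i).+1)) = 1)%N.
  by rewrite (pre_count (b := tb)) ?sumT ?Hlt' // => j; apply: T01.
have [b /andP [Hb1 Hb2]] : exists b, (tb b == 1%N) && (rk b == (rk' i).+1).
  apply/existsP; apply: contraT; rewrite negb_exists => /forallP Hn.
  by move: Hc; rewrite big1 // => j _; apply/eqP; rewrite eqb0; apply: Hn.
have Hbi : (i < b)%N.
  case: (ltngtP b i) => Hbi //.
    have h1 := goodT i; have h2 := rk_rk' i.
    have h3 : (rk b + tb b <= rk i)%N by rewrite /rk -pre_step; apply: pre_mono.
    move/eqP: Hb1 h3 => ->; move/eqP: Hb2 => ->; lia.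
  by move: HT; rewrite -(val_inj Hbi) -/(tb b) Hb1.
have Hmb : m b = 1%N by move/implyP: (Hj b) => /(_ Hbi) /eqP ->; apply/eqP.
move: Hf; rewrite (bigD1 b) /=; last by rewrite -(inj_eq val_inj) /= neq_ltn Hbi orbT.
rewrite Hmb /tau HT.
have -> : (T b == 1%N) = true by [].
by move/eqP: Hb2 => ->; rewrite eqxx; lia.
Qed.

Lemma good_notin : ~ initial_ideal (@In_ideal F n) 'X_[T].
Proof.
apply: (@notin_init F n K.+1 hh ones T).
- by move=> q i; apply: sq_coef.
- by move=> q; rewrite hsum -[X in X ^+ 2]scale1r; apply: sq_coef.
- exact: compT.
- exact: compLt.
Qed.

End Witness.

Lemma binom2 (R : comRingType) (a b : R) N :
  exists Q, (a + b) ^+ N.+1 = a ^+ 2 * Q + b ^+ N * (b + a *+ N.+1).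
Proof.
elim: N => [|N [Q IH]].
  exists 0; rewrite expr1 expr0 mul1r mulr0 add0r mulr1n; exact: addrC.
exists ((a + b) * Q + b ^+ N *+ N.+1).
rewrite exprS IH [b ^+ N.+1]exprS -(mulr_natr a N.+1) -(mulr_natr a N.+2) -(mulr_natr (b ^+ N) N.+1).
rewrite [N.+2%:R]mulrS.
move: (N.+1%:R : R) (b ^+ N) => c B.
ring.
Qed.

Section Pow.
Variables (F : fieldType) (n : nat).
Implicit Types (q : {mpoly F[n]}) (A : pred 'I_n).

Lemma mcoeff_mulL q A m : (q * \sum_(i | A i) 'X_i)@_m =
  \sum_(i | A i) (if (0 < m i)%N then q@_(m - U_(i))%MM else 0).
Proof. by rewrite mulr_sumr raddf_sum; apply: eq_bigr => i _; apply: mcoeffMXU. Qed.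

Lemma subU_add (m : 'X_{1..n}) i : (0 < m i)%N -> (m - U_(i) + U_(i))%MM = m.
Proof. by move=> h; rewrite submK // lep1mP -lt0n. Qed.

Lemma powL_supp A N (m : 'X_{1..n}) :
  ((\sum_(i | A i) 'X_i) ^+ N : {mpoly F[n]})@_m != 0 ->
  mdeg m = N /\ (forall i, ~~ A i -> m i = 0%N).
Proof.
elim: N m => [|N IH] m.
  rewrite expr0 mcoeff1; case: (m =P 0%MM) => [-> _|_]; last by rewrite /= mulr0n eqxx.
  by split=> [|i _]; rewrite ?mdeg0 ?mnm0E.
rewrite exprSr mcoeff_mulL => Hnz.
have [i /andP [Ai /andP [Hmi Hq]]] : exists i, A i && ((0 < m i)%N && (((\sum_(i | A i) 'X_i) ^+ N : {mpoly F[n]})@_(m - U_(i))%MM != 0)).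
  apply/existsP; apply: contraNT Hnz; rewrite negb_exists => /forallP Hn.
  apply/eqP; apply: big1 => i Ai; move: (Hn i); rewrite Ai /=.
  by case: ifP => //= _ /negbNE /eqP.
have [H1 H2] := IH _ Hq.
rewrite -(subU_add Hmi); split; first by rewrite mdegD H1 mdeg1 addn1.
move=> j Aj; rewrite mnmDE H2 // mnm1E.
by case: eqP => // Eij; move: Aj; rewrite -Eij Ai.
Qed.

Lemma powL_coef A N (m : 'X_{1..n}) : sqf m -> (forall i, ~~ A i -> m i = 0%N) ->
  mdeg m = N -> ((\sum_(i | A i) 'X_i) ^+ N : {mpoly F[n]})@_m = (N`!)%:R.
Proof.
elim: N m => [|N IH] m Hs HA Hd.
  by move/eqP: Hd; rewrite mdeg_eq0 => /eqP ->; rewrite expr0 mcoeff1 eqxx.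
rewrite exprSr mcoeff_mulL.
have Hs' : forall i, (m i <= 1)%N by move/forallP: Hs.
rewrite (eq_bigr (fun i => (m i * N`!)%:R)); last first.
  move=> i Ai; case: ifP => Hmi.
    have -> : m i = 1%N by move: (Hs' i) Hmi; case: (m i) => [|[|]].
    rewrite mul1n IH //.
    - apply/forallP => j; rewrite mnmBE; apply: leq_trans (leq_subr _ _) _; exact: Hs'.
    - by move=> j Aj; rewrite mnmBE HA.
    - by move: Hd; rewrite -{1}(subU_add Hmi) mdegD mdeg1 addn1 => [[]].
  by move: Hmi; case: (m i) => // _; rewrite mul0n.
rewrite -natr_sum -big_distrl /= factS.
congr (_ * _)%:R.
rewrite -Hd mdegE [X in _ = X](bigID A) /= [X in _ = (_ + X)%N]big1 ?addn0 //.
Qed.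

Lemma powL_in A N : (\sum_i (A i : nat) < N)%N ->
  In_ideal ((\sum_(i | A i) 'X_i) ^+ N : {mpoly F[n]}).
Proof.
move=> HN; apply: NS_in => m /powL_supp [Hd HA].
apply/negP => /forallP Hs.
have : (mdeg m <= \sum_i (A i : nat))%N.
  rewrite mdegE; apply: leq_sum => i _.
  by case: (boolP (A i)) => Ai; [exact: Hs | rewrite HA].
by rewrite Hd leqNgt HN.
Qed.

Lemma Lpow_in (W : pred 'I_n) p : (\sum_i (~~ W i : nat) + 2 <= p)%N ->
  In_ideal ((\sum_(i | W i) 'X_i) ^+ p : {mpoly F[n]}).
Proof.
case: p => [|N] Hp; first by move: Hp; rewrite addn2.
have E : (\sum_(i | W i) 'X_i : {mpoly F[n]}) = \sum_i 'X_i + - \sum_(i | ~~ W i) 'X_i.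
  by rewrite [\sum_i 'X_i](bigID W) /= addrK.
rewrite E; have [Q ->] := binom2 (\sum_i 'X_i) (- \sum_(i | ~~ W i) 'X_i : {mpoly F[n]}) N.
apply: in_idealD.
  by rewrite mulrC; apply: in_idealMl; apply: in_ideal_gen; right.
rewrite exprNn -mulrA; apply: in_idealMl; apply: in_idealMr.
apply: powL_in; move: Hp; lia.
Qed.

End Pow.

Section NG.
Variables (F : fieldType) (n : nat).
Implicit Types (mu : 'X_{1..n}).

Lemma init_of mu T (f : {mpoly F[n]}) : In_ideal f -> f != 0 -> is_lead_mono f T ->
  (forall i, T i <= mu i)%N -> initial_ideal (@In_ideal F n) 'X_[mu].
Proof.
move=> If fnz Hl Hle.
have -> : 'X_[mu] = 'X_[mu - T] * 'X_[T] :> {mpoly F[n]}.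
  by rewrite -mpolyXD submK //; apply/mnm_lepP.
by apply: in_idealMl; apply: in_ideal_gen; exists f, T.
Qed.

Lemma coef_filter (q : {mpoly F[n]}) (P : pred 'X_{1..n}) k :
  (\sum_(m <- msupp q | P m) q@_m *: 'X_[m])@_k = if P k then q@_k else 0.
Proof.
have Eq : q@_k = \sum_(m <- msupp q) q@_m * (m == k)%:R.
  transitivity ((\sum_(m <- msupp q) q@_m *: 'X_[m])@_k); first by rewrite -mpolyE.
  by rewrite raddf_sum /=; apply: eq_bigr => m _; rewrite mcoeffZ mcoeffX.
rewrite raddf_sum /=.
rewrite (eq_bigr (fun m => q@_m * (m == k)%:R)); last by move=> m _; rewrite mcoeffZ mcoeffX.
case: ifP => Pk.
  rewrite Eq big_mkcond /=; apply: eq_bigr => m _.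
  by case: (m =P k) => [->|_]; rewrite ?Pk // mulr0; case: ifP.
by rewrite big1 // => m Pm; case: (m =P k) => [E|_]; [rewrite E Pk in Pm | rewrite mulr0].
Qed.

Lemma lead_count (x : nat) mu (m' T : 'X_{1..n}) :
  (forall j, T j = if (j < x)%N then mu j else 0%N) ->
  sqf mu -> sqf m' ->
  (forall i : 'I_n, ~~ ((x <= i)%N || (mu i == 1%N)) -> m' i = 0%N) ->
  mdeg m' = mdeg T -> m' != T -> revlex_lt m' T.
Proof.
move=> HTj Hmu Hm' HW Hd Hne.
rewrite /revlex_lt Hd ltnn eqxx /=.
have [i0 Hi0] : exists i0, m' i0 != T i0.
  apply/existsP; apply: contraNT Hne; rewrite negb_exists => /forallP H.
  by apply/eqP/mnmP => i; apply/eqP; move: (H i); rewrite negbK.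
case: (@arg_maxnP _ i0 (fun i => m' i != T i) (fun i : 'I_n => nat_of_ord i) Hi0) => i Hi Hmax.
have Hgt : forall j : 'I_n, (i < j)%N -> m' j = T j.
  move=> j hj; apply/eqP; apply: contraTT hj => /Hmax; rewrite -leqNgt //.
apply/existsP; exists i; apply/andP; split; last first.
  by apply/forallP => j; apply/implyP => hj; rewrite Hgt.
have HmuS : forall j, (mu j <= 1)%N by move/forallP: Hmu.
have Hm'S : forall j, (m' j <= 1)%N by move/forallP: Hm'.
rewrite ltnNge; apply/negP => Hle.
have HTi : (T i <= 1)%N by rewrite HTj; case: ifP.
have Em : m' i = 0%N by move: Hi Hle HTi (Hm'S i); move/eqP; lia.
have Et : T i = 1%N by move: Hi Hle HTi (Hm'S i); move/eqP; lia.
have Hix : (i < x)%N by move: Et; rewrite HTj; case: ifP.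
have Hall : forall j, (m' j + (j == i) <= T j)%N.
  move=> j; case: (ltngtP i j) => hij.
  - have -> : (j == i) = false by rewrite -(inj_eq val_inj) /= gtn_eqF.
    by rewrite Hgt // addn0.
  - have -> : (j == i) = false by rewrite -(inj_eq val_inj) /= ltn_eqF.
    rewrite addn0 HTj (ltn_trans hij Hix).
    case: (boolP ((x <= j)%N || (mu j == 1%N))) => [|/HW -> //].
    by rewrite leqNgt (ltn_trans hij Hix) /= => /eqP ->; apply: Hm'S.
  - have -> : j = i by apply: val_inj.
    by rewrite Em Et eqxx.
have : (\sum_j (m' j + (j == i)) <= \sum_j T j)%N by apply: leq_sum => j _; exact: Hall.
rewrite big_split /= -!mdegE Hd.
rewrite (bigD1 i) //= eqxx big1 => [|j /negbTE -> //].
by rewrite addn0 addn1 ltnn.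
Qed.

Hypothesis hchar : [pchar F] =i pred0.

Lemma notgood_in mu : ~~ Good mu -> initial_ideal (@In_ideal F n) 'X_[mu].
Proof.
case: (boolP (sqf mu)) => Hs; last first.
  move=> _; move: Hs; rewrite /sqf negb_forall => /existsP [i]; rewrite -ltnNge => Hi.
  apply: (@init_of mu (U_(i) *+ 2) ('X_[U_(i) *+ 2])).
  - by apply: in_ideal_gen; left; exists i; rewrite mpolyXn.
  - apply/eqP => h; have := congr1 (mcoeff (U_(i) *+ 2)%MM) h.
    by rewrite mcoeffX eqxx mcoeff0 => /eqP; rewrite oner_eq0.
  - split; first by rewrite msuppX mem_seq1.
    by move=> m'; rewrite msuppX mem_seq1 => /eqP ->; rewrite eqxx.
  - by move=> j; rewrite mulmnE mnm1E; case: eqP => [<-|]; rewrite ?mul1n ?mul0n // ltnW.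
rewrite /Good Hs /= negb_forall => /existsP [x]; rewrite -ltnNge => Hx.
have HmuS : forall j, (mu j <= 1)%N by move/forallP: Hs.
set p := pre (fun i => mu i) x in Hx.
set T := [multinom (if (i < x)%N then mu i else 0%N) | i < n].
set W := fun i : 'I_n => (x <= i)%N || (mu i == 1%N).
set L := ((\sum_(i | W i) 'X_i) ^+ p : {mpoly F[n]}).
set f := \sum_(m <- msupp L | sqf m) L@_m *: 'X_[m].
have HTj : forall j, T j = if (j < x)%N then mu j else 0%N by move=> j; rewrite mnmE.
have HTd : mdeg T = p.
  by rewrite mdegE (eq_bigr _ (fun j _ => HTj j)) /p /pre [RHS]big_mkcond.
have HTs : sqf T by apply/forallP => j; rewrite HTj; case: ifP.
have HTW : forall i, ~~ W i -> T i = 0%N.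
  move=> i; rewrite /W HTj negb_or -ltnNge => /andP [-> H].
  by move: (HmuS i) H; case: (mu i) => [|[|]].
have HLT : L@_T = (p`!)%:R by apply: powL_coef.
have Hp0 : (p`!)%:R != 0 :> F.
  by rewrite ((pcharf0P F).1 hchar) -lt0n fact_gt0.
have HfT : f@_T = L@_T by rewrite coef_filter HTs.
have Hcard : (\sum_i (~~ W i : nat) + 2 <= p)%N.
  have -> : (\sum_i (~~ W i : nat) = pre (fun i => 1 - mu i) x)%N.
    rewrite /pre [RHS]big_mkcond /=; apply: eq_bigr => i _; rewrite /W.
    by case: ltnP => //= _; move: (HmuS i); case: (mu i) => [|[|]].
  have Hxn : (x <= n)%N by rewrite -ltnS.
  have E1 : (pre (fun i => 1 - mu i) x + pre (fun i => mu i) x = x)%N.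
    rewrite -pre_add -[RHS](pre_one Hxn); apply: eq_bigr => i _.
    by rewrite subnK.
  by rewrite -/p in E1; move: Hx E1; lia.
have If : In_ideal f.
  have -> : f = L - \sum_(m <- msupp L | ~~ sqf m) L@_m *: 'X_[m].
    by rewrite [X in X - _](mpolyE L) (bigID (@sqf n)) /= addrK.
  apply: in_idealB; first exact: Lpow_in.
  by apply: NS_in => m; rewrite coef_filter; case: ifP => //; rewrite eqxx.
apply: (@init_of mu T f If).
- apply/eqP => h; move: HfT; rewrite h mcoeff0 HLT => /eqP.
  by rewrite eq_sym (negbTE Hp0).
- split; first by rewrite mcoeff_msupp HfT HLT.
  move=> m' Hm' Hne; move: Hm'; rewrite mcoeff_msupp coef_filter.
  case: ifP => [Hs' HL|_]; last by rewrite eqxx.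
  have [Hd' HW'] := powL_supp HL.
  exact: (lead_count HTj Hs Hs' HW' (etrans Hd' (esym HTd)) Hne).
- by move=> j; rewrite HTj; case: ifP.
Qed.

End NG.

Lemma main_gen (F : fieldType) (n : nat) (hchar : [pchar F] =i pred0)
  (mu : 'X_{1..n}) : (2 * mdeg mu < n)%N ->
  ~ initial_ideal (@In_ideal F n) 'X_[mu] ->
  exists mu' : 'X_{1..n},
    (forall i, (mu i <= mu' i)%N) /\ mdeg mu' = (mdeg mu).+1 /\
    ~ initial_ideal (@In_ideal F n) 'X_[mu'].
Proof.
move=> HK Hnot.
have HG : Good mu by apply/negPn/negP => /(notgood_in hchar).
have HmuS : forall j, (mu j <= 1)%N by case/andP: HG => /forallP.
have [i0 Hi0] : exists i0 : 'I_n, mu i0 == 0%N.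
  apply/existsP; apply: contraTT HK => /existsPn H.
  have : (n <= mdeg mu)%N.
    rewrite -{1}(sum1_ord n) mdegE; apply: leq_sum => i _.
    by rewrite lt0n; apply: H.
  lia.
case: (@arg_maxnP _ i0 (fun i => mu i == 0%N) (fun i : 'I_n => nat_of_ord i) Hi0) => j Hj Hmax.
exists (mu + U_(j))%MM; split; first by move=> i; rewrite mnmDE leq_addr.
split; first by rewrite mdegD mdeg1 addn1.
apply: (@good_notin F n (mdeg mu) (mu + U_(j))%MM); last first.
- exact: HK.
- by rewrite mdegD mdeg1 addn1.
have Hpre : forall x, pre (fun i => (mu + U_(j))%MM i) x =
    (pre (fun i => mu i) x + (j < x))%N.
  move=> x.
  have -> : ((j < x)%N : nat) = pre (fun i : 'I_n => (j == i) : nat) x.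
    rewrite /pre; case: ltnP => hj.
      by rewrite (bigD1 j) //= eqxx big1 // => i /andP [_ /negbTE]; rewrite eq_sym => ->.
    by rewrite big1 // => i hi; case: eqP => // E; move: hj hi; rewrite E; lia.
  by rewrite -pre_add; apply: eq_bigr => i _; rewrite mnmDE mnm1E.
apply/andP; split.
  apply/forallP => i; rewrite mnmDE mnm1E.
  by case: eqP => [<-|_]; rewrite ?(eqP Hj) ?addn0.
apply/forallP => x; rewrite Hpre.
case/andP: HG => _ /forallP /(_ x) Hx.
case: ltnP => hjx; last by rewrite addn0.
(* all indices above j have mu = 1 *)
have Hup : forall k, (x + k <= n)%N -> pre (fun i => mu i) (x + k) = (pre (fun i => mu i) x + k)%N.
  elim=> [|k IH] hk; first by rewrite !addn0.
  have hk' : (x + k < n)%N by rewrite addnS in hk.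
  rewrite addnS (preS _ hk') (IH (ltnW hk')).
  have : mu (Ordinal hk') != 0%N.
    apply/negP => /Hmax /=; lia.
  by move: (HmuS (Ordinal hk')); case: (mu _) => [|[|]] //= _ _; rewrite addn1 addnS.
have Hxn : (x <= n)%N by rewrite -ltnS.
have := Hup (n - x)%N; rewrite subnKC // (pre_full _ (leqnn n)) -mdegE => /(_ (leqnn n)).
move: HK hjx Hxn; lia.
Qed.

Unset Implicit Arguments.

Theorem mainTheorem6 (F : fieldType) (d : nat)
  (hchar : [pchar F] =i pred0) (hd : (2 <= d)%N)
  (mu : 'X_{1..(2 * d - 2)}) :
  (mdeg mu <= d - 2)%N ->
  ~ initial_ideal (@In_ideal F (2 * d - 2)) 'X_[mu] ->
  exists mu' : 'X_{1..(2 * d - 2)},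
    (forall i, (mu i <= mu' i)%N) /\
    mdeg mu' = (mdeg mu).+1 /\
    ~ initial_ideal (@In_ideal F (2 * d - 2)) 'X_[mu'].
Proof.
move=> Hdeg Hnot; apply: (main_gen hchar) => //.
move: Hdeg hd; lia.
Qed.
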